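(* For any sample $(x,u)$, generative parameters $\theta$ and inference parameters $\phi$, the function $\alpha\mapsto \mathrm{ELBO}_{\theta,\phi}(\alpha;x,u)$ is concave on $[0,1]$. It is strictly concave on $[0,1]$ if and only if $q_\phi(z|x)\neq q_\phi(z|x,u)$ on a set of $z$ of positive Lebesgue measure.
   Context: Observations $x\in\mathbb{R}^{d_X}$, covariates $u\in\mathbb{R}^{d_U}$, latents $z\in\mathbb{R}^{d_Z}$, $d_Z<d_X$. Generative parameters $\theta=(f,T,\lambda)$: mixing function $f:\mathbb{R}^{d_Z}\to\mathbb{R}^{d_X}$, label prior density $p_{T,\lambda}(z|u)=\prod_{i=1}^{d_Z}\exp(\lambda_i(u)\cdot T_i(z_i)-A(u)+B(z_i))$ (conditionally factorial exponential family with known $A,B$), decoder density $p_f(x|z)=p_\epsilon(x-f(z))$ for a fixed noise density $p_\epsilon$. Inference parameters $\phi$ determine an encoder density $q_\phi(z|x)$ and a posterior density $q_\phi(z|x,u)$ on $\mathbb{R}^{d_Z}$. For $\alpha\in[0,1]$, with $m_\alpha=\alpha q_\phi(\cdot|x)+(1-\alpha)q_\phi(\cdot|x,u)$, $\mathrm{ELBO}_{\theta,\phi}(\alpha;x,u)=\mathbb{E}_{z\sim m_\alpha}\log p_f(x|z)-\mathcal{D}_{\mathrm{KL}}(m_\alpha\|p_{T,\lambda}(\cdot|u))$. All expectations and divergences appearing are assumed finite. *)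

(* Defs.v *)
From HB Require Import structures.
From mathcomp Require Import all_boot all_order all_algebra.
From mathcomp Require Import all_classical all_reals all_analysis.
Set Implicit Arguments.
Unset Strict Implicit.
Unset Printing Implicit Defensive.
Import Order.TTheory GRing.Theory Num.Theory.
Local Open Scope classical_set_scope.
Local Open Scope ring_scope.

(* R^n is represented by n.-tuple R, equipped by MathComp-Analysis with the
   product (= Borel) sigma-algebra generated by the coordinate maps. *)

(* [mu] is Lebesgue measure on R^n: it assigns to every closed box its volume.
   (By uniqueness of the Caratheodory extension this characterizes Lebesgue
   measure on the Borel sets of R^n.) *)
Definition is_lebesgue (R : realType) (n : nat)
    (mu : {measure set (n.-tuple R) -> \bar R}) : Prop :=
  forall a b : n.-tuple R, (forall i, tnth a i <= tnth b i) ->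
    mu [set z | forall i, tnth a i <= tnth z i <= tnth b i] =
    (\prod_(i < n) (tnth b i - tnth a i))%:E.

Definition is_density (R : realType) (n : nat)
    (mu : {measure set (n.-tuple R) -> \bar R}) (p : n.-tuple R -> R) : Prop :=
  [/\ measurable_fun setT p, forall z, 0 <= p z & (\int[mu]_z (p z)%:E = 1)%E].

Definition tsub (R : realType) (n : nat) (x y : n.-tuple R) : n.-tuple R :=
  [tuple tnth x i - tnth y i | i < n].

Definition elog (R : realType) (t : R) : \bar R :=
  if 0 < t then (ln t)%:E else -oo%E.

Definition prior (R : realType) (dZ dU k : nat)
    (T : 'I_dZ -> R -> k.-tuple R) (lam : 'I_dZ -> dU.-tuple R -> k.-tuple R)
    (A : dU.-tuple R -> R) (B : R -> R) (u : dU.-tuple R) (z : dZ.-tuple R) : R :=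
  \prod_(i < dZ) expR ((\sum_(j < k) tnth (lam i u) j * tnth (T i (tnth z i)) j)
                        - A u + B (tnth z i)).

Definition decoder (R : realType) (dX dZ : nat) (peps : dX.-tuple R -> R)
    (f : dZ.-tuple R -> dX.-tuple R) (x : dX.-tuple R) (z : dZ.-tuple R) : R :=
  peps (tsub x (f z)).

Definition mixture (R : realType) (n : nat) (alpha : R) (q1 q2 : n.-tuple R -> R)
    (z : n.-tuple R) : R :=
  alpha * q1 z + (1 - alpha) * q2 z.

Definition loglik_integrand (R : realType) (n : nat) (m : n.-tuple R -> R)
    (lik : n.-tuple R -> R) (z : n.-tuple R) : \bar R :=
  ((m z)%:E * elog (lik z))%E.

(* integrand of KL(m || p) = int m log (m / p), with 0 log 0 = 0 *)
Definition kl_integrand (R : realType) (n : nat) (m p : n.-tuple R -> R)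
    (z : n.-tuple R) : \bar R :=
  ((m z)%:E * (elog (m z) - elog (p z)))%E.

Definition KL (R : realType) (n : nat) (mu : {measure set (n.-tuple R) -> \bar R})
    (m p : n.-tuple R -> R) : \bar R :=
  (\int[mu]_z kl_integrand m p z)%E.

Definition expect_loglik (R : realType) (n : nat)
    (mu : {measure set (n.-tuple R) -> \bar R}) (m lik : n.-tuple R -> R) : \bar R :=
  (\int[mu]_z loglik_integrand m lik z)%E.

Definition ELBO (R : realType) (dX dZ dU k : nat)
    (muZ : {measure set (dZ.-tuple R) -> \bar R})
    (peps : dX.-tuple R -> R) (f : dZ.-tuple R -> dX.-tuple R)
    (T : 'I_dZ -> R -> k.-tuple R) (lam : 'I_dZ -> dU.-tuple R -> k.-tuple R)
    (A : dU.-tuple R -> R) (B : R -> R)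
    (q_enc : dX.-tuple R -> dZ.-tuple R -> R)
    (q_post : dX.-tuple R -> dU.-tuple R -> dZ.-tuple R -> R)
    (x : dX.-tuple R) (u : dU.-tuple R) (alpha : R) : \bar R :=
  let m := mixture alpha (q_enc x) (q_post x u) in
  (expect_loglik muZ m (decoder peps f x) - KL muZ m (prior T lam A B u))%E.

Definition concave_on01 (R : realType) (F : R -> \bar R) : Prop :=
  forall a b t : R, (0 <= a <= 1)%R -> (0 <= b <= 1)%R -> (0 <= t <= 1)%R ->
    ((t%:E * F a + (1 - t)%R%:E * F b) <= F (t * a + (1 - t) * b)%R)%E.

Definition strictly_concave_on01 (R : realType) (F : R -> \bar R) : Prop :=
  forall a b t : R, (0 <= a <= 1)%R -> (0 <= b <= 1)%R -> a != b -> (0 < t < 1)%R ->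
    ((t%:E * F a + (1 - t)%R%:E * F b) < F (t * a + (1 - t) * b)%R)%E.

(* Main.v *)
Require Import Defs.
From HB Require Import structures.
From mathcomp Require Import all_boot all_order all_algebra.
From mathcomp Require Import all_classical all_reals all_analysis.
From mathcomp Require Import lra ring measurable_realfun.
Set Implicit Arguments.
Unset Strict Implicit.
Import Order.TTheory GRing.Theory Num.Theory.
Local Open Scope classical_set_scope.
Local Open Scope ring_scope.

Section R.
Variable R : realType.
Implicit Types x y c t : R.

Lemma ln_le_sub1 y : 0 < y -> ln y <= y - 1.
Proof.
move=> y0; have := expR_ge1Dx (ln y); rewrite lnK ?posrE//; lra.
Qed.

Lemma ln_lt_sub1 y : 0 < y -> y != 1 -> ln y < y - 1.
Proof.
move=> y0 y1; have : ln y != 0 by rewrite ln_eq0.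
move=> /expR_gt1Dx; rewrite lnK ?posrE//; lra.
Qed.

Definition phi x := if 0 < x then x * ln x else 0.

Lemma phi_key x c : 0 <= x -> 0 < c -> x * ln c + x - c <= phi x.
Proof.
rewrite /phi le_eqVlt => /orP[/eqP<-|x0] c0; first by rewrite ltxx; lra.
rewrite x0; have := ln_le_sub1 (divr_gt0 c0 x0).
rewrite ln_div ?posrE// => h.
have : x * (ln c - ln x) <= x * (c / x - 1) by rewrite ler_wpM2l// ltW.
rewrite mulrBr mulrBr mulrCA divff ?gt_eqF// mulr1 mulr1; lra.
Qed.

Lemma phi_skey x c : 0 <= x -> 0 < c -> x != c -> x * ln c + x - c < phi x.
Proof.
rewrite /phi le_eqVlt => /orP[/eqP<-|x0] c0 xc; first by rewrite ltxx; lra.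
rewrite x0; have : c / x != 1.
  apply: contra xc => /eqP /(congr1 (fun y => y * x)); rewrite mul1r divfK ?lt0r_neq0// => h'.
  by rewrite h'.
move=> /(ln_lt_sub1 (divr_gt0 c0 x0)).
rewrite ln_div ?posrE// => h.
have : x * (ln c - ln x) < x * (c / x - 1) by rewrite ltr_pM2l.
rewrite mulrBr mulrBr mulrCA divff ?gt_eqF// mulr1 mulr1; lra.
Qed.

Lemma phi0 : phi 0 = 0. Proof. by rewrite /phi ltxx. Qed.

Lemma phi_convex x y t : 0 <= x -> 0 <= y -> 0 <= t <= 1 ->
  phi (t * x + (1 - t) * y) <= t * phi x + (1 - t) * phi y.
Proof.
move=> x0 y0 /andP[t0 t1].
set c := t * x + (1 - t) * y.
have tx0 : 0 <= t * x by rewrite mulr_ge0.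
have ty0 : 0 <= (1 - t) * y by rewrite mulr_ge0// subr_ge0.
have [c0|] := ltP 0 c.
  have h1 := phi_key x0 c0; have h2 := phi_key y0 c0.
  have e1 : t * (x * ln c + x - c) <= t * phi x by rewrite ler_wpM2l.
  have e2 : (1 - t) * (y * ln c + y - c) <= (1 - t) * phi y by rewrite ler_wpM2l// subr_ge0.
  rewrite [phi c]/phi c0.
  have -> : c * ln c = t * (x * ln c + x - c) + (1 - t) * (y * ln c + y - c).
    by rewrite /c; ring.
  lra.
move=> c0.
have tx : t * x = 0 by rewrite /c in c0; lra.
have ty : (1 - t) * y = 0 by rewrite /c in c0; lra.
have -> : c = 0 by rewrite /c; lra.
have -> : t * phi x = 0.
  rewrite /phi; case: ifP => _; last by rewrite mulr0.
  by rewrite mulrA tx mul0r.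
have -> : (1 - t) * phi y = 0.
  rewrite /phi; case: ifP => _; last by rewrite mulr0.
  by rewrite mulrA ty mul0r.
by rewrite phi0 addr0.
Qed.

Lemma phi_sconvex x y t : 0 <= x -> 0 <= y -> 0 < t < 1 -> x != y ->
  phi (t * x + (1 - t) * y) < t * phi x + (1 - t) * phi y.
Proof.
move=> x0 y0 /andP[t0 t1] xy.
set c := t * x + (1 - t) * y.
have tx0 : 0 <= t * x by rewrite mulr_ge0// ltW.
have ty0 : 0 <= (1 - t) * y by rewrite mulr_ge0// subr_ge0 ltW.
have c0 : 0 < c.
  rewrite lt_neqAle addr_ge0// andbT; apply/eqP => c0.
  have tx : t * x = 0 by rewrite /c in c0; lra.
  have ty : (1 - t) * y = 0 by rewrite /c in c0; lra.
  move: tx ty => /eqP; rewrite mulf_eq0 gt_eqF//= => /eqP x00.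
  move/eqP; rewrite mulf_eq0 subr_eq0 (gt_eqF t1) /= => /eqP y00.
  by move: xy; rewrite x00 y00 eqxx.
have h1 := phi_key x0 c0; have h2 := phi_key y0 c0.
have e1 : t * (x * ln c + x - c) <= t * phi x by rewrite ler_wpM2l// ltW.
have e2 : (1 - t) * (y * ln c + y - c) <= (1 - t) * phi y by rewrite ler_wpM2l// subr_ge0 ltW.
rewrite [phi c]/phi c0.
have -> : c * ln c = t * (x * ln c + x - c) + (1 - t) * (y * ln c + y - c).
  by rewrite /c; ring.
have [xc|xc] := eqVneq x c.
  have yc : y != c by apply: contra xy => /eqP ->; rewrite xc.
  have := phi_skey y0 c0 yc => h.
  have e3 : (1 - t) * (y * ln c + y - c) < (1 - t) * phi y by rewrite ltr_pM2l// subr_gt0.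
  lra.
have := phi_skey x0 c0 xc => h.
have e3 : t * (x * ln c + x - c) < t * phi x by rewrite ltr_pM2l.
lra.
Qed.

End R.
Lemma G_repr (R : realType) (m l p : R) : 0 <= m ->
  ((m%:E * elog l) \is a fin_num)%E ->
  ((m%:E * (elog m - elog p)) \is a fin_num)%E ->
  (m%:E * elog l - m%:E * (elog m - elog p))%E = (m * (ln l + ln p) - phi m)%:E.
Proof.
rewrite le_eqVlt => /orP[/eqP<-|m0]; first by rewrite !mul0e phi0 mul0r subrr sube0.
rewrite /elog m0 /phi m0.
case: ifPn => l0; last by rewrite mulr_infty gtr0_sg// mul1e.
case: ifPn => p0; last by rewrite /= addey// mulr_infty gtr0_sg// mul1e.
move=> _ _ /=; rewrite -EFinB; congr EFin; ring.
Qed.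
Section aeint.
Local Open Scope ereal_scope.
Context d (T : measurableType d) (R : realType) (mu : {measure set T -> \bar R}).

Lemma ae_ge0_integral_eq (f : T -> \bar R) : mu.-integrable setT f ->
  {ae mu, forall x, 0 <= f x} ->
  \int[mu]_x f x = \int[mu]_x f^\+ x.
Proof.
move=> fi f0; have mf := measurable_int _ fi.
rewrite integralE.
rewrite (@ae_eq_integral _ _ _ mu setT (cst 0) f^\-) //; last 2 first.
- exact: measurable_funeneg.
- apply: filterS f0 => x fx0 _; rewrite funenegE /=.
  by apply: max_r; rewrite oppe_le0.
by rewrite integral0 sube0.
Qed.

Lemma ae_ge0_integral (f : T -> \bar R) : mu.-integrable setT f ->
  {ae mu, forall x, 0 <= f x} -> 0 <= \int[mu]_x f x.
Proof.
move=> fi f0; rewrite ae_ge0_integral_eq//.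
by apply: integral_ge0 => x _; exact: funepos_ge0.
Qed.

Lemma ae_gt0_integral (f : T -> \bar R) (S : set T) : mu.-integrable setT f ->
  {ae mu, forall x, 0 <= f x} -> measurable S -> 0 < mu S ->
  {ae mu, forall x, S x -> 0 < f x} -> 0 < \int[mu]_x f x.
Proof.
move=> fi f0 mS muS fS; have mf := measurable_int _ fi.
rewrite lt_neqAle ae_ge0_integral// andbT; apply/negP => /eqP H.
have : \int[mu]_x `|f^\+ x| = 0.
  transitivity (\int[mu]_x f x); last by rewrite -H.
  rewrite [RHS]ae_ge0_integral_eq//.
  by apply: eq_integral => x _; rewrite gee0_abs// funepos_ge0.
move/(ae_eq_integral_abs mu measurableT (measurable_funepos mf)) => fp0.
have : {ae mu, forall x, ~ S x}.
  apply: filterS2 fp0 fS => x h1 h2 Sx.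
  have h3 := h2 Sx; have := h1 I; rewrite funeposE /= max_l ?(ltW h3)// => h4.
  by move: h3; rewrite h4 ltxx.
move=> hS; have : mu.-negligible S.
  case: hS => N [mN N0 sN]; exists N; split => // x Sx; apply: sN => /=; exact.
move/(negligibleP _ mS) => muS0.
by move: muS; rewrite muS0 ltxx.
Qed.

End aeint.
Section main.
Context (R : realType) (n : nat) (mu : {measure set (n.-tuple R) -> \bar R}).
Variables (q1 q2 lik pr : n.-tuple R -> R).
Hypotheses (q10 : forall z, 0 <= q1 z) (q20 : forall z, 0 <= q2 z).
Let L (a : R) := loglik_integrand (mixture a q1 q2) lik.
Let K (a : R) := kl_integrand (mixture a q1 q2) pr.
Hypothesis hint : forall a : R, 0 <= a <= 1 ->
  mu.-integrable setT (L a) /\ mu.-integrable setT (K a).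
Let E (a : R) := (\int[mu]_z L a z - \int[mu]_z K a z)%E.

Let m0 (a : R) z : 0 <= a <= 1 -> 0 <= mixture a q1 q2 z.
Proof.
by move=> /andP[a0 a1]; rewrite /mixture addr_ge0// mulr_ge0// subr_ge0.
Qed.

Let mixc (a b t : R) z : mixture (t * a + (1 - t) * b) q1 q2 z =
  t * mixture a q1 q2 z + (1 - t) * mixture b q1 q2 z.
Proof. rewrite /mixture; ring. Qed.

Let Gz (a : R) z : 0 <= a <= 1 -> (L a z \is a fin_num)%E -> (K a z \is a fin_num)%E ->
  (L a z - K a z)%E = (mixture a q1 q2 z * (ln (lik z) + ln (pr z)) - phi (mixture a q1 q2 z))%:E.
Proof. by move=> a01 hL hK; rewrite /L /K G_repr// m0. Qed.

Let c01 (a b t : R) : 0 <= a <= 1 -> 0 <= b <= 1 -> 0 <= t <= 1 -> 0 <= t * a + (1 - t) * b <= 1.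
Proof. move=> /andP[? ?] /andP[? ?] /andP[? ?]; apply/andP; split; nra. Qed.

Let F (a b t : R) z := (t%:E * (L a z - K a z) + (1 - t)%:E * (L b z - K b z))%E.

Let Fint (a b t : R) : 0 <= a <= 1 -> 0 <= b <= 1 -> mu.-integrable setT (F a b t).
Proof.
move=> a01 b01; have [La Ka] := hint a01; have [Lb Kb] := hint b01.
apply: (integrableD measurableT); apply: (integrableZl measurableT);
  exact: (integrableB measurableT).
Qed.

Let intF (a b t : R) : 0 <= a <= 1 -> 0 <= b <= 1 ->
  (\int[mu]_z F a b t z = t%:E * E a + (1 - t)%:E * E b)%E.
Proof.
move=> a01 b01; have [La Ka] := hint a01; have [Lb Kb] := hint b01.
rewrite /F integralD//; last 2 first.
- by apply: (integrableZl measurableT); exact: (integrableB measurableT).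
- by apply: (integrableZl measurableT); exact: (integrableB measurableT).
rewrite integralZl//; last exact: (integrableB measurableT).
rewrite integralZl//; last exact: (integrableB measurableT).
have h1 := integralB measurableT La Ka.
have h2 := integralB measurableT Lb Kb.
by rewrite /= in h1 h2; rewrite h1 h2.
Qed.

Let Eint (a : R) : 0 <= a <= 1 -> mu.-integrable setT (fun z => L a z - K a z)%E.
Proof. by move=> a01; have [La Ka] := hint a01; exact: (integrableB measurableT). Qed.

Let Efin (a : R) : 0 <= a <= 1 -> (E a \is a fin_num)%E.
Proof.
move=> a01; have [La Ka] := hint a01.
by rewrite /E fin_numB !integrable_fin_num.
Qed.

Let finae (a : R) : 0 <= a <= 1 ->
  {ae mu, forall z, (L a z \is a fin_num) && (K a z \is a fin_num)}%E.
Proof.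
move=> a01; have [La Ka] := hint a01.
apply: filterS2 (integrable_ae measurableT La) (integrable_ae measurableT Ka).
by move=> z h1 h2; rewrite h1 ?h2.
Qed.

Let diffH (a b t : R) := (fun z => (L (t * a + (1 - t) * b) z - K (t * a + (1 - t) * b) z) - F a b t z)%E.

Let key (a b t : R) : 0 <= a <= 1 -> 0 <= b <= 1 -> 0 <= t <= 1 ->
  (\int[mu]_z diffH a b t z = E (t * a + (1 - t) * b) - (t%:E * E a + (1 - t)%:E * E b))%E.
Proof.
move=> a01 b01 t01; have c := c01 a01 b01 t01.
rewrite /diffH (integralB measurableT (Eint c) (Fint t a01 b01)) intF//.
have [Lc Kc] := hint c.
by rewrite (integralB measurableT Lc Kc).
Qed.

Let diffH_ge0 (a b t : R) : 0 <= a <= 1 -> 0 <= b <= 1 -> 0 <= t <= 1 ->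
  {ae mu, forall z, 0 <= diffH a b t z}%E.
Proof.
move=> a01 b01 t01; have c := c01 a01 b01 t01.
apply: filterS2 (finae a01) (filterI (finae b01) (finae c)).
move=> z /andP[La Ka] [/andP[Lb Kb] /andP[Lc Kc]].
rewrite /diffH /F (Gz a01)// (Gz b01)// (Gz c)// -!EFinM subre_ge0// -EFinD lee_fin mixc.
have := phi_convex (m0 z a01) (m0 z b01) t01.
lra.
Qed.

Lemma concave_E : forall a b t : R, 0 <= a <= 1 -> 0 <= b <= 1 -> 0 <= t <= 1 ->
  (t%:E * E a + (1 - t)%:E * E b <= E (t * a + (1 - t) * b))%E.
Proof.
move=> a b t a01 b01 t01.
rewrite -subre_ge0; last first.
  exact: Efin (c01 a01 b01 t01).
rewrite -key//; apply: ae_ge0_integral.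
- exact: (integrableB measurableT (Eint (c01 a01 b01 t01)) (Fint t a01 b01)).
- exact: diffH_ge0.
Qed.


Hypotheses (mq1 : measurable_fun setT q1) (mq2 : measurable_fun setT q2).

Let mS : measurable [set z | q1 z != q2 z].
Proof.
have m1 : measurable_fun setT (EFin \o q1) by exact/measurable_EFinP.
have m2 : measurable_fun setT (EFin \o q2) by exact/measurable_EFinP.
have := measurable_neqe measurableT m1 m2.
rewrite setTI; congr measurable; apply/seteqP; split => z /=; by rewrite eqe.
Qed.

Lemma strict_E :
  (forall a b t : R, 0 <= a <= 1 -> 0 <= b <= 1 -> a != b -> 0 < t < 1 ->
    (t%:E * E a + (1 - t)%:E * E b < E (t * a + (1 - t) * b))%E) <->
  (0 < mu [set z | q1 z != q2 z])%E.
Proof.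
split.
- move=> H; rewrite lt0e measure_ge0 andbT; apply/negP => /eqP mu0.
  have ae12 : {ae mu, forall z, q1 z = q2 z}.
    exists [set z | q1 z != q2 z]; split => // z /= /eqP; exact.
  have EE a : 0 <= a <= 1 -> E a = E 0.
    move=> a01; have [La Ka] := hint a01.
    have h01 : 0 <= (0:R) <= 1 by apply/andP; split; lra.
    have [L0 K0] := hint h01.
    rewrite /E (ae_eq_integral (L 0) (L a) measurableT (measurable_int _ La) (measurable_int _ L0)).
      rewrite (ae_eq_integral (K 0) (K a) measurableT (measurable_int _ Ka) (measurable_int _ K0)) //.
      apply: filterS ae12 => z h _; rewrite /K /kl_integrand /mixture h.
      by congr (((_)%:E * (elog (_) - _))%E); ring.
    apply: filterS ae12 => z h _; rewrite /L /loglik_integrand /mixture h.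
    by congr (((_)%:E * _)%E); ring.
  have h0 : 0 <= (0:R) <= 1 by apply/andP; split; lra.
  have h1 : 0 <= (1:R) <= 1 by apply/andP; split; lra.
  have ht : 0 < (2^-1:R) < 1 by apply/andP; split; lra.
  have := H 1 0 (2^-1) h1 h0 (oner_neq0 R : (1:R) != 0) ht.
  rewrite (EE 1 h1) EE; last by apply/andP; split; lra.
  have := Efin h0; case: (E 0) => // r _.
  rewrite -!EFinM -EFinD lte_fin; lra.
- move=> muS a b t a01 b01 ab /andP[t0 t1].
  have t01 : 0 <= t <= 1 by apply/andP; split; lra.
  have c := c01 a01 b01 t01.
  rewrite -sube_gt0 -key//; apply: (ae_gt0_integral _ _ mS muS).
  + exact: (integrableB measurableT (Eint c) (Fint t a01 b01)).
  + exact: diffH_ge0.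
  apply: filterS2 (finae a01) (filterI (finae b01) (finae c)).
  move=> z /andP[La Ka] [/andP[Lb Kb] /andP[Lc Kc]] /= q12.
  rewrite /diffH /F (Gz a01)// (Gz b01)// (Gz c)// -!EFinM sube_gt0 -EFinD lte_fin mixc.
  have mab : mixture a q1 q2 z != mixture b q1 q2 z.
    apply: contra q12; rewrite /mixture => /eqP h.
    have : (a - b) * (q1 z - q2 z) == 0.
      apply/eqP; have : a * q1 z + (1 - a) * q2 z - (b * q1 z + (1 - b) * q2 z) = 0 by rewrite h subrr.
      move=> h2; rewrite -[RHS]h2; ring.
    by rewrite mulf_eq0 subr_eq0 (negbTE ab) /= subr_eq0.
  have t01s : 0 < t < 1 by rewrite t0 t1.
  have := phi_sconvex (m0 z a01) (m0 z b01) t01s mab.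
  lra.
Qed.

End main.

Theorem proposition6 (R : realType) (dX dZ dU k : nat)
    (muZ : {measure set (dZ.-tuple R) -> \bar R})
    (muX : {measure set (dX.-tuple R) -> \bar R})
    (peps : dX.-tuple R -> R) (f : dZ.-tuple R -> dX.-tuple R)
    (T : 'I_dZ -> R -> k.-tuple R) (lam : 'I_dZ -> dU.-tuple R -> k.-tuple R)
    (A : dU.-tuple R -> R) (B : R -> R)
    (q_enc : dX.-tuple R -> dZ.-tuple R -> R)
    (q_post : dX.-tuple R -> dU.-tuple R -> dZ.-tuple R -> R)
    (x : dX.-tuple R) (u : dU.-tuple R) :
  (dZ < dX)%N ->
  is_lebesgue muZ -> is_lebesgue muX ->
  is_density muX peps ->
  (forall u', is_density muZ (prior T lam A B u')) ->
  (forall x', is_density muZ (q_enc x')) ->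
  (forall x' u', is_density muZ (q_post x' u')) ->
  (* all expectations and divergences appearing are finite *)
  (forall alpha : R, (0 <= alpha <= 1)%R ->
     muZ.-integrable setT
       (loglik_integrand (mixture alpha (q_enc x) (q_post x u))
                         (decoder peps f x)) /\
     muZ.-integrable setT
       (kl_integrand (mixture alpha (q_enc x) (q_post x u)) (prior T lam A B u))) ->
  concave_on01 (ELBO muZ peps f T lam A B q_enc q_post x u) /\
  (strictly_concave_on01 (ELBO muZ peps f T lam A B q_enc q_post x u) <->
   (0 < muZ [set z | q_enc x z != q_post x u z])%E).
Proof.
move=> _ _ _ _ _ henc hpost hint.
have [mq1 q10 _] := henc x.
have [mq2 q20 _] := hpost x u.
split.
  exact: (concave_E q10 q20 hint).
exact: (strict_E q10 q20 hint mq1 mq2).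
Qed.
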